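(* Let $\mathbf{G}=(\mathcal{V},\mathcal{E})$ be a strongly connected directed graph on $\mathcal{V}=\{1,\dots,m\}$ with diameter $\delta(\mathbf{G})$. Suppose each node $i$ holds a real input $x_i$ and its identifier $i$, and the Top-$k$ consensus algorithm (described in the context) is run with $T$ rounds, where $T\geq \delta(\mathbf{G})$. Then at termination, for every pair of nodes $i,j\in\mathcal{V}$, $L_i=L_j=(x_{(1)},\dots,x_{(k)})$ and $\ell_i=\ell_j=(I_{(1)},\dots,I_{(k)})$.
   Context: Communication takes place over the directed graph $\mathbf{G}$ in synchronous, reliable rounds; $\mathcal{N}_i^{in}$ is the set of nodes $j$ with $(j,i)\in\mathcal{E}$ and $\mathcal{N}_i^{out}$ the set of nodes $j$ with $(i,j)\in\mathcal{E}$. The diameter $\delta(\mathbf{G})$ is the maximum over ordered pairs of nodes of the length of a shortest directed path between them. Order the input–identifier pairs as $x_{(1)}\ge x_{(2)}\ge\dots\ge x_{(m)}$ with corresponding identifiers $I_{(1)},\dots,I_{(m)}$, where ties are broken in favor of the larger identifier (if $x_{(j)}=x_{(j+1)}$ then $I_{(j)}>I_{(j+1)}$); $k\le m$ is a positive integer. Top-$k$ consensus algorithm: each node $i$ keeps two length-$k$ lists $L_i$ (values) and $\ell_i$ (identifiers), initialized to $L_i=(x_i,\perp,\dots,\perp)$, $\ell_i=(i,\perp,\dots,\perp)$, where $\perp$ denotes an empty entry. In each round $t=1,\dots,T$, every node $i$ sends $(L_i,\ell_i)$ to all out-neighbors, receives $(L_j,\ell_j)$ from all in-neighbors $j\in\mathcal{N}_i^{in}$,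 and replaces $(L_i,\ell_i)$ by the (up to) $k$ largest value–identifier pairs among those in its own lists and the received lists (duplicates of the same pair counted once), sorted in decreasing order of value with ties going to the larger identifier. *)

(* Defs.v *)
From HB Require Import structures.
From mathcomp Require Import all_boot all_order all_algebra.
From mathcomp Require Import reals.
Set Implicit Arguments. Unset Strict Implicit. Unset Printing Implicit Defensive.
Import Order.TTheory GRing.Theory Num.Theory.
Local Open Scope ring_scope.

Section TopK.
Variables (R : realType) (m : nat).

(* ---- Graph notions: nodes are 'I_m, directed edge relation e (e j i <-> (j,i) in E) *)

Fixpoint ball (e : rel 'I_m) (n : nat) (i : 'I_m) : {set 'I_m} :=
  if n is n'.+1 then
    ball e n' i :|: [set y | [exists x in ball e n' i, e x y]]
  else [set i].

(* length of a shortest directed path from i to j (m if none exists;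
   when the graph is strongly connected a shortest path has length < m) *)
Definition dist (e : rel 'I_m) (i j : 'I_m) : nat :=
  find (fun n => j \in ball e n i) (iota 0 m).

Definition diameter (e : rel 'I_m) : nat :=
  \max_(i : 'I_m) \max_(j : 'I_m) dist e i j.

Definition strongly_connected (e : rel 'I_m) : Prop :=
  forall i j : 'I_m, connect e i j.

Definition before (p q : R * 'I_m) : bool :=
  (q.1 < p.1) || ((p.1 == q.1) && (q.2 <= p.2)%N).

Definition init_state (x : 'I_m -> R) (i : 'I_m) : seq (R * 'I_m) :=
  [:: (x i, i)].

Definition round (k : nat) (e : rel 'I_m) (s : 'I_m -> seq (R * 'I_m))
    (i : 'I_m) : seq (R * 'I_m) :=
  take k (sort before
    (undup (s i ++ flatten [seq s j | j <- enum 'I_m & e j i]))).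

Definition run (k : nat) (e : rel 'I_m) (x : 'I_m -> R) (T : nat) :
    'I_m -> seq (R * 'I_m) :=
  iter T (round k e) (init_state x).

(* the length-k lists L_i (values) and l_i (identifiers); None is the empty entry ⊥ *)
Definition Lvals (k : nat) (s : seq (R * 'I_m)) : seq (option R) :=
  [seq omap fst (ohead (drop t s)) | t <- iota 0 k].
Definition Lids (k : nat) (s : seq (R * 'I_m)) : seq (option 'I_m) :=
  [seq omap snd (ohead (drop t s)) | t <- iota 0 k].

Definition ordered_pairs (x : 'I_m -> R) : seq (R * 'I_m) :=
  sort before [seq (x i, i) | i <- enum 'I_m].

End TopK.

(* Main.v *)
Require Import Defs.
From HB Require Import structures.
From mathcomp Require Import all_boot all_order all_algebra.
From mathcomp Require Import reals.
Import Order.TTheory GRing.Theory Num.Theory.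
Set Implicit Arguments. Unset Strict Implicit. Unset Printing Implicit Defensive.

Section Gen.
Variables (R : realType) (m : nat).
Local Notation P := (R * 'I_m)%type.
Local Notation bf := (@before R m).

Lemma bf_refl (p : P) : bf p p.
Proof. by rewrite /before; apply/orP; right; rewrite eqxx leqnn. Qed.

Lemma bf_total : total bf.
Proof.
move=> p q; rewrite /before.
case: (ltgtP q.1 p.1) => [h|h|h] //=; try by rewrite orbT.
exact: leq_total.
Qed.

Lemma bf_trans : transitive bf.
Proof.
move=> q p r; rewrite /before.
case/orP=> [h1|/andP[/eqP e1 h1]]; case/orP=> [h2|/andP[/eqP e2 h2]].
- by rewrite (lt_trans h2 h1).
- by rewrite -e2 h1.
- by rewrite e1 h2.
- by rewrite e1 e2 eqxx (leq_trans h2 h1) orbT.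
Qed.

Lemma bf_anti : antisymmetric bf.
Proof.
case=> [a i] [b j]; rewrite /before /=.
case/andP; case/orP=> [h1|/andP[/eqP e1 h1]]; case/orP=> [h2|/andP[/eqP e2 h2]].
- by move: (lt_trans h1 h2); rewrite ltxx.
- by move: h1; rewrite e2 ltxx.
- by move: h2; rewrite e1 ltxx.
- by rewrite e1; congr (_, _); apply: val_inj; apply/eqP; rewrite eqn_leq h1 h2.
Qed.

Definition lt (p q : P) := bf p q && (p != q).

Lemma lt_irr : irreflexive lt.
Proof. by move=> p; rewrite /lt eqxx andbF. Qed.

Lemma lt_tr : transitive lt.
Proof.
move=> q p r /andP[h1 n1] /andP[h2 n2]; rewrite /lt (bf_trans h1 h2) /=.
apply/eqP=> epr; move: h2; rewrite -epr => h2.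
by move/eqP: n1; apply; apply: bf_anti; rewrite h1 h2.
Qed.

Lemma lt_bf_tr z y w : lt z y -> bf y w -> lt z w.
Proof.
move=> /andP[h1 n1] h2; rewrite /lt (bf_trans h1 h2) /=.
apply/eqP=> ezw; move: h2; rewrite -ezw => h2.
by move/eqP: n1; apply; apply: bf_anti; rewrite h1 h2.
Qed.

Lemma nlt_bf w y : ~~ lt w y -> bf y w.
Proof.
rewrite /lt negb_and negbK; case/orP=> [h|/eqP->]; last exact: bf_refl.
by case/orP: (bf_total w y) => //; rewrite (negbTE h).
Qed.

Variable k : nat.
Definition topk (U : seq P) := take k (sort bf (undup U)).
Definition rk (U : seq P) (y : P) := count (lt^~ y) (undup U).

Lemma sorted_strict (s : seq P) : uniq s -> sorted bf s -> sorted lt s.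
Proof.
elim: s => // a s IH /= /andP[na us] ps.
have ss := path_sorted ps.
case: s IH na us ps ss => //= b s IH na us /andP[hab pbs] ss.
rewrite /lt hab /=; apply/andP; split.
  by apply: contra na => /eqP->; rewrite inE eqxx.
exact: IH.
Qed.

Lemma topk_sorted U : sorted lt (topk U).
Proof.
apply: (subseq_sorted lt_tr (take_subseq _ _)).
apply: sorted_strict; first by rewrite sort_uniq undup_uniq.
apply: sort_sorted; exact: bf_total.
Qed.

Lemma index_count (s : seq P) y : sorted lt s -> y \in s -> index y s = count (lt^~ y) s.
Proof.
elim: s => // a s IH /= ps.
have ss := path_sorted ps.
have al : all (lt a) s by apply: order_path_min => //; exact: lt_tr.
rewrite inE; case: eqP => [eay _|ne ys].
  subst y.
  rewrite eqxx; apply/esym; apply/eqP; rewrite addn_eq0 lt_irr andTb -leqn0 leqNgt -has_count.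
  apply/hasPn=> z zs; apply/negP=> lzy; move/allP: al => /(_ z zs) laz.
  by move: (lt_tr laz lzy); rewrite lt_irr.
have -> : lt a y by move/allP: al; apply.
case: eqP => [eay|_]; first by move: ne; rewrite eay.
by rewrite /= IH.
Qed.

Lemma mem_topk U y : (y \in topk U) = (y \in U) && (rk U y < k).
Proof.
rewrite /topk /rk.
have pe : perm_eq (sort bf (undup U)) (undup U) by apply: permEl; exact: perm_sort.
have st : sorted lt (sort bf (undup U)).
  apply: sorted_strict; first by rewrite sort_uniq undup_uniq.
  apply: sort_sorted; exact: bf_total.
case yU: (y \in U); last first.
  apply/negP => /mem_take; by rewrite mem_sort mem_undup yU.
have ys : y \in sort bf (undup U) by rewrite mem_sort mem_undup.
by rewrite in_take // index_count // (permP pe).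
Qed.


Lemma topkE A B : A =i B -> topk A = topk B.
Proof.
move=> AB; rewrite /topk; congr (take k _); apply/perm_sortP.
- exact: bf_total.
- exact: bf_trans.
- exact: bf_anti.
apply: uniq_perm; rewrite ?undup_uniq // => z; by rewrite !mem_undup.
Qed.

Lemma rk_sub A B y : {subset A <= B} -> rk A y <= rk B y.
Proof.
move=> AB; rewrite /rk -!size_filter; apply: uniq_leq_size.
  by rewrite filter_uniq ?undup_uniq.
by move=> z; rewrite !mem_filter !mem_undup => /andP[-> /AB].
Qed.

Lemma rk_mono U y w : bf y w -> rk U y <= rk U w.
Proof. by move=> h; apply: sub_count => z /= lzy; apply: lt_bf_tr lzy h. Qed.

Lemma topk_sub A : {subset topk A <= A}.
Proof. by move=> z; rewrite mem_topk => /andP[]. Qed.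

Lemma topk_uniq A : uniq (topk A).
Proof. by rewrite /topk take_uniq // sort_uniq undup_uniq. Qed.

Lemma topkG A B : topk (topk A ++ B) = topk (A ++ B).
Proof.
apply: (irr_sorted_eq lt_tr lt_irr (topk_sorted _) (topk_sorted _)) => y.
rewrite !mem_topk !mem_cat.
set A' := topk A.
have sub : {subset A' ++ B <= A ++ B}.
  by move=> z; rewrite !mem_cat => /orP[/topk_sub->|->]; rewrite ?orbT.
apply/idP/idP.
- case/andP=> yin hk.
  have yin' : (y \in A) || (y \in B).
    by move: (sub y); rewrite !mem_cat; apply.
  rewrite yin' /=.
  case: (ltnP (rk A y) k) => hA.
    suff -> : rk (A ++ B) y = rk (A' ++ B) y by [].
    rewrite /rk -!size_filter; apply: perm_size; apply: uniq_perm;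
      rewrite ?filter_uniq ?undup_uniq // => z.
    rewrite !mem_filter !mem_undup; case lzy: (lt z y) => //=.
    apply/idP/idP; last by move/sub.
    rewrite !mem_cat; case/orP=> [zA|->]; last by rewrite orbT.
    by rewrite mem_topk zA (leq_ltn_trans (rk_mono _ (andP lzy).1) hA).
  exfalso; move: hk; apply/negP; rewrite -leqNgt.
  have szA : size A' = k.
    rewrite /A' /topk size_takel // size_sort.
    by apply: (leq_trans hA); apply: count_size.
  rewrite -{1}szA /rk -size_filter; apply: uniq_leq_size; first exact: topk_uniq.
  move=> w wA; rewrite mem_filter mem_undup mem_cat wA andbT.
  apply/negPn/negP => nl; move: wA; rewrite mem_topk => /andP[_ hw].
  by move: (leq_trans hA (rk_mono A (nlt_bf nl))); rewrite leqNgt hw.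
- case/andP=> yin hk.
  rewrite (leq_ltn_trans (rk_sub y sub) hk) andbT.
  case/orP: yin => [yA|->]; last by rewrite orbT.
  rewrite mem_topk yA /= (leq_ltn_trans _ hk) //.
  by apply: rk_sub => z zA; rewrite mem_cat zA.
Qed.

Lemma topkG' A B : topk (A ++ topk B) = topk (A ++ B).
Proof.
rewrite (@topkE (A ++ topk B) (topk B ++ A)); last by move=> z; rewrite !mem_cat orbC.
by rewrite topkG; apply: topkE => z; rewrite !mem_cat orbC.
Qed.

Lemma topkF (I : Type) (f : I -> seq P) (js : seq I) :
  topk (flatten [seq topk (f j) | j <- js]) = topk (flatten [seq f j | j <- js]).
Proof.
elim: js => //= a js IH.
by rewrite topkG -[LHS]topkG' IH topkG'.
Qed.

End Gen.

Section Main.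
Variables (R : realType) (m : nat) (e : rel 'I_m) (x : 'I_m -> R) (k : nat).
Local Notation P := (R * 'I_m)%type.

Definition S t i : seq P := [seq (x j, j) | j <- enum 'I_m & i \in ball e t j].

Lemma mem_S t i z : (z \in S t i) = (z == (x z.2, z.2)) && (i \in ball e t z.2).
Proof.
apply/mapP/andP => [[j]|[/eqP ez bz]].
  by rewrite mem_filter => /andP[bj _] ->; rewrite /= eqxx.
by exists z.2; rewrite // mem_filter mem_enum bz.
Qed.

Lemma mem_flat (l : seq 'I_m) (f : 'I_m -> seq P) z :
  (z \in flatten [seq f j | j <- l]) = has (fun j => z \in f j) l.
Proof. by elim: l => //= a l IH; rewrite mem_cat IH. Qed.

Lemma run_inv t i : (0 < k)%N -> run k e x t i = topk k (S t i).
Proof.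
move=> k0; elim: t i => [|t IH] i.
  rewrite /run /= /init_state (@topkE _ _ k _ [:: (x i, i)]).
    by rewrite /topk /=; case: k k0.
  case=> a j; rewrite mem_S /= in_set1 inE !xpair_eqE /= eqxx andbT.
  case: (eqVneq i j) => [->|ne]; first by rewrite andbT.
  by rewrite !andbF.
change (take k (sort (@before R m) (undup (flatten
   [seq run k e x t j | j <- i :: [seq j <- enum 'I_m | e j i]]))) = topk k (S t.+1 i)).
rewrite -/(topk k _).
have -> : [seq run k e x t j | j <- i :: [seq j <- enum 'I_m | e j i]] =
          [seq topk k (S t j) | j <- i :: [seq j <- enum 'I_m | e j i]].
  by apply: eq_map => j; exact: IH.
rewrite topkF; apply: topkE => z.
rewrite /= mem_cat mem_flat !mem_S /= in_setU in_set.
case ez: (z == (x z.2, z.2)) => /=; last first.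
  by apply/negbTE/hasPn => j _; rewrite mem_S ez.
congr (_ || _).
apply/hasP/existsP => [[j]|[j /andP[jb eji]]].
  by rewrite mem_filter mem_enum andbT mem_S ez /= => eji jb; exists j; rewrite jb eji.
by exists j; [rewrite mem_filter mem_enum eji | rewrite mem_S ez jb].
Qed.

Lemma ball_mono n d j i : i \in ball e n j -> i \in ball e (n + d) j.
Proof.
elim: d => [|d IH]; first by rewrite addn0.
by move=> h; rewrite addnS /= in_setU (IH h).
Qed.

Lemma path_ball a p : path e a p -> last a p \in ball e (size p) a.
Proof.
elim/last_ind: p => [|p z IH]; first by rewrite /= in_set1.
rewrite rcons_path last_rcons size_rcons => /andP[pp ez].
rewrite /= in_setU in_set; apply/orP; right; apply/existsP; exists (last a p).
by rewrite IH.
Qed.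

Lemma reach j i : strongly_connected e -> (dist e j i <= diameter e)%N /\ i \in ball e (dist e j i) j.
Proof.
move=> sc; split.
  apply: leq_trans (leq_bigmax j); exact: (leq_bigmax (F := fun i' => dist e j i') i).
have [n nm nb] : exists2 n, (n < m)%N & i \in ball e n j.
  move/connectP: (sc j i) => [p pth ->].
  case/shortenP: pth => p' pp' up' _.
  exists (size p'); last exact: path_ball.
  have := uniq_leq_size up' (fun z _ => mem_enum 'I_m z).
  by rewrite size_enum_ord.
have hs : has (fun n => i \in ball e n j) (iota 0 m).
  by apply/hasP; exists n; rewrite // mem_iota.
have := nth_find 0 hs; rewrite nth_iota //; last by move: hs; rewrite has_find size_iota.

Qed.

Lemma Lv_map (A : Type) (f : P -> A) (s : seq P) :
  [seq omap f (ohead (drop t s)) | t <- iota 0 (size s)] = [seq Some (f p) | p <- s].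
Proof.
elim: s => //= a s IH; congr (_ :: _).
rewrite -IH -[1%N]addn0 iotaDl -map_comp; apply: eq_map => t /=.
by rewrite add0n.
Qed.

End Main.

Theorem theorem1 (R : realType) (m : nat) (e : rel 'I_m) (x : 'I_m -> R)
    (k T : nat) :
  strongly_connected e ->
  (0 < k)%N -> (k <= m)%N ->
  (diameter e <= T)%N ->
  forall i j : 'I_m,
    let s := run k e x T in
    [/\ Lvals k (s i) = Lvals k (s j),
        Lvals k (s i) = [seq Some p.1 | p <- take k (ordered_pairs x)],
        Lids k (s i) = Lids k (s j)
      & Lids k (s i) = [seq Some p.2 | p <- take k (ordered_pairs x)]].
Proof.
move=> sc k0 km dT.
have key : forall i, run k e x T i = take k (ordered_pairs x).
  move=> i; rewrite run_inv // (@topkE _ _ k _ [seq (x j, j) | j <- enum 'I_m]).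
    rewrite /topk undup_id //; rewrite map_inj_uniq ?enum_uniq //.
    by move=> a b [].
  move=> z; rewrite mem_S; apply/andP/mapP => [[/eqP ez _]|[j _ ->]].
    by exists z.2; rewrite ?mem_enum.
  split=> //=; have [h1 h2] := reach j i sc.
  by rewrite -(subnKC (leq_trans h1 dT)); apply: ball_mono.
have sz : size (take k (ordered_pairs x)) = k.
  by rewrite size_takel // /ordered_pairs size_sort size_map size_enum_ord.
move=> i j s; rewrite /s !key.
rewrite /Lvals /Lids; split=> //; rewrite -[in iota 0 k]sz Lv_map //.
Qed.
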